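(* Let $\Phi:\mathbb{R}^N\to\mathbb{R}^M$ and $L:\mathbb{R}^P\to\mathbb{R}^N$ be linear operators, let $\|\cdot\|_A$ be a norm on $\mathbb{R}^P$ with dual norm $\|\cdot\|_A^*$, and set $R(x)=\|L^*x\|_A$. Let $y\in\mathbb{R}^M$, $\lambda>0$, and let $x^\star$ be a minimizer of $\min_{x\in\mathbb{R}^N}\tfrac12\|y-\Phi x\|_2^2+\lambda R(x)$. Assume $\|\cdot\|_A$ is decomposable at $u^\star=L^*x^\star$ with associated subspace $T$ and vector $e\in T$, let $S=T^\perp$, and assume moreover that $\|\cdot\|_A$ is separable on $S=V\oplus W$ for subspaces $V,W$. Assume that there exist $\eta\in\mathbb{R}^M$ and $\alpha\in\partial\|\cdot\|_A(L^*x^\star)$ with $\Phi^*\eta=L\alpha$ and $\|\alpha_V\|_A^*<1$, and that $\Phi$ is injective on $\ker(L_V^* )$. Then $x^\star$ is the unique minimizer of this problem.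
   Context: For a subspace $V\subset\mathbb{R}^P$, $P_V$ denotes the orthogonal projector onto $V$, and $L_V=LP_V$, $L_V^*=P_VL^*$, $\alpha_V=P_V\alpha$ for $\alpha\in\mathbb{R}^P$. A norm $\|\cdot\|_A$ on $\mathbb{R}^P$ is decomposable at $u\in\mathbb{R}^P$ if (i) there exist a subspace $T\subset\mathbb{R}^P$ and a vector $e\in T$ such that $\partial\|\cdot\|_A(u)=\{\alpha\in\mathbb{R}^P:\ \alpha_T=e,\ \|\alpha_{T^\perp}\|_A^*\le 1\}$, and (ii) for every $z\in T^\perp$, $\|z\|_A=\sup\{\langle v,z\rangle: v\in T^\perp,\ \|v\|_A^*\le 1\}$. The decomposable norm is separable on $T^\perp=S=V\oplus W$ if $\|u_{T^\perp}\|_A=\|u_V\|_A+\|u_W\|_A$ for all $u\in\mathbb{R}^P$. *)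

(* Defs.v *)
From mathcomp Require Import all_boot all_order all_algebra.
From mathcomp Require Import boolp classical_sets reals.
Set Implicit Arguments. Unset Strict Implicit. Unset Printing Implicit Defensive.
Import Order.TTheory GRing.Theory Num.Theory.
Local Open Scope ring_scope.
Local Open Scope classical_set_scope.

Section Defs.
Variable R : realType.

(* Vectors of R^P are column vectors 'cV[R]_P; linear operators are matrices,
   applied by left multiplication; the adjoint is the transpose. *)

Definition dotv (P : nat) (a b : 'cV[R]_P) : R := \sum_(i < P) a i 0 * b i 0.
Definition sqnorm2 (P : nat) (a : 'cV[R]_P) : R := \sum_(i < P) a i 0 ^+ 2.

Definition is_norm (P : nat) (nA : 'cV[R]_P -> R) : Prop :=
  [/\ forall x, nA x = 0 -> x = 0,
      forall (c : R) x, nA (c *: x) = `|c| * nA x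
    & forall x y, nA (x + y) <= nA x + nA y].

Definition dual_norm (P : nat) (nA : 'cV[R]_P -> R) (a : 'cV[R]_P) : R :=
  sup [set dotv a x | x in [set x | nA x <= 1]].

Definition subdiff (P : nat) (f : 'cV[R]_P -> R) (u : 'cV[R]_P) : set 'cV[R]_P :=
  [set a | forall z, f u + dotv a (z - u) <= f z].

(* Subspaces of R^P are represented (mxalgebra style) as row spaces of
   square matrices 'M_P; a column vector x lies in U iff (x^T <= U)%MS. *)
Definition inspace (P : nat) (U : 'M[R]_P) (x : 'cV[R]_P) : bool := (x^T <= U)%MS.

Definition perp (P : nat) (U : 'M[R]_P) : 'M[R]_P := kermx U^T.

Definition proj (P : nat) (U : 'M[R]_P) : 'M[R]_P :=
  let B := row_base U in B^T *m invmx (B *m B^T) *m B.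

Definition decomposable_at (P : nat) (nA : 'cV[R]_P -> R) (u : 'cV[R]_P)
    (T : 'M[R]_P) (e : 'cV[R]_P) : Prop :=
  [/\ inspace T e,
      subdiff nA u =
        [set a | proj T *m a = e /\ dual_norm nA (proj (perp T) *m a) <= 1]
    & forall z, inspace (perp T) z ->
        nA z = sup [set dotv v z | v in
                     [set v | inspace (perp T) v /\ dual_norm nA v <= 1]]].

Definition separable_on (P : nat) (nA : 'cV[R]_P -> R) (S V W : 'M[R]_P) : Prop :=
  [/\ (V + W :=: S)%MS, (V :&: W)%MS = 0
    & forall u, nA (proj S *m u) = nA (proj V *m u) + nA (proj W *m u)].

Definition objective (M N P : nat) (Phi : 'M[R]_(M, N)) (L : 'M[R]_(N, P))
    (nA : 'cV[R]_P -> R) (y : 'cV[R]_M) (lambda : R) (x : 'cV[R]_N) : R :=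
  2^-1 * sqnorm2 (y - Phi *m x) + lambda * nA (L^T *m x).

Definition is_minimizer (N : nat) (J : 'cV[R]_N -> R) (x : 'cV[R]_N) : Prop :=
  forall z, J x <= J z.

End Defs.

(* Main.v *)
Require Import Defs.
From mathcomp Require Import all_boot all_order all_algebra.
From mathcomp Require Import boolp classical_sets reals ring lra.
From mathcomp Require Import topology normedtype matrix_normedtype derive.
Import Order.TTheory GRing.Theory Num.Theory.
Import numFieldNormedType.Exports.
Set Implicit Arguments. Unset Strict Implicit. Unset Printing Implicit Defensive.
Local Open Scope ring_scope.

Section NormFacts.
Variables (R : realType) (P : nat) (nA : 'cV[R]_P -> R).
Hypothesis hn : is_norm nA.

Lemma nA0 : nA 0 = 0.
Proof. case: hn => _ hZ _. by rewrite -(scale0r (0 : 'cV[R]_P)) hZ normr0 mul0r. Qed.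

Lemma nAN x : nA (- x) = nA x.
Proof. case: hn => _ hZ _. by rewrite -scaleN1r hZ normrN normr1 mul1r. Qed.

Lemma nA_ge0 x : 0 <= nA x.
Proof.
case: hn => _ _ hT. have := hT x (- x). rewrite subrr nA0 nAN.
by rewrite -mulr2n pmulrn_lge0.
Qed.

Lemma nA_eq0 x : (nA x == 0) = (x == 0).
Proof.
case: hn => h0 _ _. apply/eqP/eqP; first exact: h0. by move=> ->; exact: nA0.
Qed.

Lemma nA_sum n (F : 'I_n -> 'cV[R]_P) : nA (\sum_i F i) <= \sum_i nA (F i).
Proof.
case: hn => _ _ hT.
elim/big_ind2: _ => //; first by rewrite nA0.
by move=> a b c d h1 h2; apply: le_trans (hT _ _) _; exact: lerD.
Qed.

Definition Kc := \sum_(i < P) nA (delta_mx i 0).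

Lemma nA_ub (x : 'cV[R]_P) (M : R) : (forall i, `|x i 0| <= M) -> nA x <= Kc * M.
Proof.
case: hn => _ hZ _ hM.
have -> : x = \sum_i x i 0 *: delta_mx i 0.
  by rewrite {1}(matrix_sum_delta x); apply: eq_bigr => i _; rewrite big_ord1.
apply: le_trans; first exact: nA_sum.
rewrite /Kc mulr_suml; apply: ler_sum => i _.
rewrite hZ mulrC ler_wpM2l //; exact: nA_ge0.
Qed.
End NormFacts.
Arguments Kc {R P}.

Section BSec.
Local Open Scope classical_set_scope.


Lemma coord_le_mxnorm (R : realType) n (v : 'rV[R]_n) i : `|v ord0 i| <= `|v|.
Proof.
rewrite [leRHS]/Num.norm /= mx_normrE; apply/bigmax_geP; right => /=.
by exists (ord0, i).
Qed.

Section LB.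
Variables (R : realType) (P : nat) (nA : 'cV[R]_P -> R).
Hypothesis hn : is_norm nA.

Let f (v : 'rV[R]_P) := nA v^T.

Lemma f_lip a b : `|f a - f b| <= Kc nA * `|a - b|.
Proof.
case: (hn) => _ _ hT.
have H1 : forall a b : 'rV[R]_P, f a - f b <= Kc nA * `|a - b|.
  move=> a' b'; rewrite lerBlDl /f.
  have -> : a'^T = b'^T + (a' - b')^T by rewrite -linearD /= addrC subrK.
  apply: le_trans (hT _ _) _; rewrite lerD2l; apply: nA_ub => // i.
  by rewrite mxE; exact: coord_le_mxnorm.
rewrite ler_norml H1 andbT lerNl opprB -normrN opprB; exact: H1.
Qed.

Lemma f_cont : continuous f.
Proof.
move=> v; apply/(@cvgrPdist_lt _ _ _ (nbhs v) (nbhs_filter v)) => eps e0.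
have K0 : 0 < Kc nA + 1.
  by rewrite ltr_wpDl // /Kc sumr_ge0 // => i _; apply: nA_ge0; exact: hn.
near=> w.
apply: le_lt_trans (f_lip v w) _.
apply: (@le_lt_trans _ _ ((Kc nA + 1) * `|v - w|)).
  by rewrite ler_wpM2r // lerDl.
rewrite -ltr_pdivlMl //.
near: w.
apply: cvgr_dist_lt; last by rewrite mulr_gt0 // invr_gt0.
exact: cvg_id.
Unshelve. all: by end_near.
Qed.

End LB.

Lemma nA_lb (R : realType) (P : nat) (nA : 'cV[R]_P -> R) (hn : is_norm nA) : exists c, 0 < c /\ forall (x : 'cV[R]_P) i, `|x i 0| <= c * nA x.
Proof.
case: P nA hn => [|p] nA' hn'.
  by exists 1; split => // x [].
pose A := [set v : 'rV[R]_p.+1 | `|v| = 1].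
have A0 : A !=set0.
  pose v : 'rV[R]_p.+1 := const_mx 1.
  have v0 : v != 0.
    apply/eqP => /matrixP /(_ ord0 ord0); rewrite !mxE => /eqP; by rewrite oner_eq0.
  exists (`|v|^-1 *: v); rewrite /A /= normrZ normrV ?unitfE ?normr_eq0 //.
  by rewrite normr_id mulVf // normr_eq0.
have Acl : closed A.
  apply: (@preimage_closed _ _ (fun v : 'rV[R]_p.+1 => `|v|) [set 1]).
    by move=> x _; exact: norm_continuous.
  exact: closed_eq.
have Abd : bounded_set A.
  rewrite /= /bounded_near; near=> M => v /= ->.
  near: M; exact: nbhs_pinfty_ge.
have Acp := bounded_closed_compact Abd Acl.
have fc : {within A, continuous (fun v : 'rV[R]_p.+1 => nA' v^T)}.
  by apply: continuous_subspaceT; exact: (@f_cont _ _ _ hn').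
have [c cA cmin] := EVT_min_rV A0 Acp fc.
have m0 : 0 < nA' c^T.
  rewrite lt_neqAle nA_ge0 // andbT eq_sym nA_eq0 //.
  move: cA; rewrite inE /A /= => c1; apply/eqP => /(congr1 trmx); rewrite trmxK linear0 => c0.
  by move: c1; rewrite c0 normr0 => /eqP; rewrite eq_sym oner_eq0.
exists (nA' c^T)^-1; split; first by rewrite invr_gt0.
move=> x i.
have [->|x0] := eqVneq x 0; first by rewrite mxE normr0 nA0 // mulr0.
have nv0 : 0 < `|x^T|.
  by rewrite normr_gt0; apply: contra x0 => /eqP /(congr1 trmx); rewrite trmxK linear0 => ->.
have wA : (`|x^T|^-1 *: x^T) \in A.
  by rewrite inE /A /= normrZ normrV ?unitfE ?gt_eqF // normr_id mulVf // gt_eqF.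
have := cmin _ wA; rewrite linearZ /= trmxK.
case: hn' => _ hZ _; rewrite hZ normrV ?unitfE ?gt_eqF // normr_id.
rewrite ler_pdivlMl // => H.
apply: (@le_trans _ _ `|x^T|).
  by have := @coord_le_mxnorm _ _ x^T i; rewrite mxE.
by rewrite ler_pdivlMl // mulrC.
Unshelve. all: by end_near.
Qed.

End BSec.

Section Proj.
Variables (R : realType) (P : nat).
Implicit Types (U : 'M[R]_P) (z a b : 'cV[R]_P).

Lemma dotvE n (a b : 'cV[R]_n) : dotv a b = (a^T *m b) 0 0.
Proof. rewrite /dotv mxE; apply: eq_bigr => i _; by rewrite mxE. Qed.

Lemma dotvC a b : dotv a b = dotv b a.
Proof. rewrite /dotv; apply: eq_bigr => i _; by rewrite mulrC. Qed.

Lemma dotvDr a b c : dotv a (b + c) = dotv a b + dotv a c.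
Proof. rewrite /dotv -big_split; apply: eq_bigr => i _; by rewrite mxE mulrDr. Qed.

Lemma dotvDl a b c : dotv (b + c) a = dotv b a + dotv c a.
Proof. by rewrite dotvC dotvDr !(dotvC a). Qed.

Lemma dotvZr (k : R) a b : dotv a (k *: b) = k * dotv a b.
Proof. rewrite /dotv mulr_sumr; apply: eq_bigr => i _; rewrite mxE; ring. Qed.

Lemma dotvNr a b : dotv a (- b) = - dotv a b.
Proof. by rewrite -scaleN1r dotvZr mulN1r. Qed.

Lemma dotvBr a b c : dotv a (b - c) = dotv a b - dotv a c.
Proof. by rewrite dotvDr dotvNr. Qed.

Lemma dotv0r a : dotv a 0 = 0.
Proof. by rewrite /dotv big1 // => i _; rewrite mxE mulr0. Qed.

Lemma dotv0l a : dotv 0 a = 0.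
Proof. by rewrite dotvC dotv0r. Qed.

Lemma dotv_mul m (M : 'M[R]_(m, P)) (a : 'cV[R]_m) b :
  dotv a (M *m b) = dotv (M^T *m a) b.
Proof. by rewrite !dotvE trmx_mul trmxK mulmxA. Qed.

Lemma vvT0 n (v : 'rV[R]_n) : v *m v^T = 0 -> v = 0.
Proof.
move=> /matrixP /(_ 0 0); rewrite !mxE => H.
have H' : forall i, v 0 i = 0.
  move=> i; apply/eqP; rewrite -sqrf_eq0; apply/eqP.
  have H2 : \sum_j v 0 j ^+ 2 = 0 by rewrite -[RHS]H; apply: eq_bigr => j _; rewrite mxE expr2.
  by apply: (psumr_eq0P _ H2) => // j _; exact: sqr_ge0.
by apply/rowP => i; rewrite mxE H'.
Qed.

Definition BB U := row_base U.

Lemma G_unit U : (BB U *m (BB U)^T) \in unitmx.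
Proof.
rewrite -row_free_unit -kermx_eq0; apply/rowV0P => w /sub_kermxP H.
have : (w *m BB U) *m (w *m BB U)^T = 0.
  by rewrite trmx_mul mulmxA -(mulmxA w) H mul0mx.
move/vvT0/eqP; rewrite mulmx_free_eq0; [by move/eqP | exact: row_base_free].
Qed.

Lemma projE U : proj U = (BB U)^T *m invmx (BB U *m (BB U)^T) *m BB U.
Proof. by []. Qed.

Lemma proj_sym U : (proj U)^T = proj U.
Proof.
rewrite projE; move: (BB U) => B.
by rewrite !trmx_mul trmxK trmx_inv trmx_mul trmxK mulmxA.
Qed.

Lemma BB_proj U : BB U *m proj U = BB U.
Proof.
by rewrite projE !mulmxA mulmxV ?G_unit // mul1mx.
Qed.

Lemma BB_sub U : (BB U <= U)%MS.
Proof. by rewrite eq_row_base. Qed.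

Lemma U_sub_BB U : (U <= BB U)%MS.
Proof. by rewrite eq_row_base. Qed.

Lemma proj_id U k (A : 'M[R]_(P, k)) : (A^T <= U)%MS -> proj U *m A = A.
Proof.
move=> /(submx_trans) /(_ (U_sub_BB U)) /submxP [D HD].
by apply: trmx_inj; rewrite trmx_mul proj_sym HD -mulmxA BB_proj.
Qed.

Lemma proj_in U k (A : 'M[R]_(P, k)) : ((proj U *m A)^T <= U)%MS.
Proof.
rewrite projE; apply: submx_trans (BB_sub U); move: (BB U) => B.
rewrite !trmx_mul trmxK !mulmxA; exact: submxMl.
Qed.

Lemma proj_orth U z : U *m z = 0 -> proj U *m z = 0.
Proof.
move=> H; have /submxP [D HD] := BB_sub U.
have Bz : BB U *m z = 0 by rewrite HD -mulmxA H mulmx0.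
rewrite projE; move: (BB U) Bz => B Bz.
by rewrite -!mulmxA Bz !mulmx0.
Qed.

Lemma inperpP U z : inspace (perp U) z <-> U *m z = 0.
Proof.
rewrite /inspace /perp; split.
  by move/sub_kermxP => H; rewrite -[_ *m _]trmxK trmx_mul H trmx0.
by move=> H; apply/sub_kermxP; rewrite -trmx_mul H trmx0.
Qed.

Lemma perp_orth U z : inspace U z -> perp U *m z = 0.
Proof.
rewrite /inspace /perp => /submxP [D HD].
by rewrite -[z]trmxK HD trmx_mul mulmxA mulmx_ker mul0mx.
Qed.

Lemma proj_inv U z : inspace U (proj U *m z).
Proof. exact: proj_in. Qed.

Lemma proj_idv U z : inspace U z -> proj U *m z = z.
Proof. exact: proj_id. Qed.

Lemma U_proj U : U *m proj U = U.
Proof.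
have /submxP [D HD] := U_sub_BB U.
by rewrite {1}HD -mulmxA BB_proj -HD.
Qed.

Lemma decomp U z : z = proj U *m z + proj (perp U) *m z.
Proof.
set w := z - proj U *m z.
have Uw : U *m w = 0.
  by rewrite /w mulmxBr mulmxA U_proj subrr.
have h1 : proj (perp U) *m w = w by apply: proj_idv; apply/inperpP.
have h2 : proj (perp U) *m (proj U *m z) = 0.
  by apply: proj_orth; apply: perp_orth; exact: proj_inv.
have : proj (perp U) *m z = w.
  by rewrite -{1}[z](subrK (proj U *m z)) -/w mulmxDr h1 h2 addr0.
by move=> ->; rewrite /w addrC subrK.
Qed.

End Proj.

Section DSec.
Local Open Scope classical_set_scope.


Section Main.
Variables (R : realType) (P : nat) (nA : 'cV[R]_P -> R).
Hypothesis hn : is_norm nA.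

Lemma subdiff_char u a : subdiff nA u a ->
  dotv a u = nA u /\ forall z, dotv a z <= nA z.
Proof.
move=> H.
have h0 := H 0; rewrite (nA0 hn) sub0r dotvNr in h0.
have h2 := H (u + u); rewrite addrK in h2.
have e2 : nA (u + u) = 2 * nA u.
  case: hn => _ hZ _; by rewrite -mulr2n -scaler_nat hZ normr_nat.
rewrite e2 in h2.
have du : dotv a u = nA u by lra.
split => // z; have := H z; rewrite dotvBr du; lra.
Qed.

Lemma dual_le a z : dotv a z <= dual_norm nA a * nA z.
Proof.
have [c [c0 hc]] := nA_lb hn.
rewrite /dual_norm.
set E := [set dotv a x | x in [set x | nA x <= 1]].
have hs : has_sup E.
  split; first by exists (dotv a 0); exists 0 => //=; rewrite (nA0 hn).
  exists (c * \sum_i `|a i 0|) => _ [x hx <-].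
  rewrite /dotv mulr_sumr; apply: ler_sum => i _.
  apply: le_trans (ler_norm _) _; rewrite normrM mulrC ler_wpM2r //.
  apply: le_trans (hc x i) _; by rewrite ler_piMr // ltW.
have [->|z0] := eqVneq z 0; first by rewrite dotv0r (nA0 hn) mulr0.
have nz : 0 < nA z by rewrite lt_neqAle eq_sym (nA_eq0 hn) z0 (nA_ge0 hn).
have Ez : E (dotv a ((nA z)^-1 *: z)).
  exists ((nA z)^-1 *: z) => //=.
  case: hn => _ hZ _; rewrite hZ ger0_norm ?invr_ge0 ?(ltW nz) // mulVf // lt0r_neq0 //.
have := sup_upper_bound hs Ez; rewrite dotvZr.
by rewrite ler_pdivrMl // mulrC.
Qed.

Lemma dual0 : dual_norm nA 0 <= 1.
Proof.
apply: ge_sup; first by exists (dotv (0 : 'cV[R]_P) 0); exists 0 => //=; rewrite (nA0 hn).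
by move=> _ [x _ <-]; rewrite dotv0l.
Qed.

Lemma inspace0 (U : 'M[R]_P) : inspace U 0.
Proof. by rewrite /inspace trmx0 sub0mx. Qed.

Lemma sepdec (T V W : 'M[R]_P) :
  (V + W :=: perp T)%MS ->
  (forall u : 'cV[R]_P, nA (proj (perp T) *m u) = nA (proj V *m u) + nA (proj W *m u)) ->
  forall z : 'cV[R]_P, proj (perp T) *m z = proj V *m z + proj W *m z.
Proof.
move=> sVW sep.
have VS : (V <= perp T)%MS by rewrite -sVW addsmxSl.
have WS : (W <= perp T)%MS by rewrite -sVW addsmxSr.
have PWV : forall a, inspace V a -> proj W *m a = 0.
  move=> a ha; have haS : inspace (perp T) a := submx_trans ha VS.
  have := sep a; rewrite (proj_idv haS) (proj_idv ha) => e.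
  have h1 : nA (proj W *m a) = 0 by lra.
  by case: hn => h0 _ _; apply: h0.
have PVW : forall a, inspace W a -> proj V *m a = 0.
  move=> a ha; have haS : inspace (perp T) a := submx_trans ha WS.
  have := sep a; rewrite (proj_idv haS) (proj_idv ha) => e.
  have h1 : nA (proj V *m a) = 0 by lra.
  by case: hn => h0 _ _; apply: h0.
have PXS : forall X : 'M[R]_P, (X <= perp T)%MS ->
    proj X *m proj (perp T) = proj X.
  move=> X XS; apply: trmx_inj; rewrite trmx_mul !proj_sym; apply: proj_id.
  have := proj_in X 1%:M; rewrite mulmx1 => h.
  exact: submx_trans h XS.
move=> z.
have := proj_in (perp T) z; rewrite -sVW => /sub_addsmxP [[c d] /= hcd].
set a := (c *m V)^T; set b := (d *m W)^T.
have eq : proj (perp T) *m z = a + b.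
  by apply: trmx_inj; rewrite hcd linearD /= !trmxK.
have ha : inspace V a by rewrite /inspace trmxK submxMl.
have hb : inspace W b by rewrite /inspace trmxK submxMl.
have e1 : proj V *m z = a.
  by rewrite -(PXS V VS) -mulmxA eq mulmxDr (proj_idv ha) (PVW _ hb) addr0.
have e2 : proj W *m z = b.
  by rewrite -(PXS W WS) -mulmxA eq mulmxDr (proj_idv hb) (PWV _ ha) add0r.
by rewrite eq e1 e2.
Qed.

End Main.

End DSec.

Section Final.
Local Open Scope classical_set_scope.
Variables (R : realType) (P : nat) (nA : 'cV[R]_P -> R).
Hypothesis hn : is_norm nA.

Lemma PV_zero (u e alpha v : 'cV[R]_P) (T V W : 'M[R]_P) :
  decomposable_at nA u T e ->
  separable_on nA (perp T) V W ->
  subdiff nA u alpha ->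
  dual_norm nA (proj V *m alpha) < 1 ->
  dotv alpha v = nA v ->
  proj V *m v = 0.
Proof.
move=> [dT dsub dsup] [sVW _ sep] asub adual hv.
have sd := sepdec hn sVW sep.
have [_ aub] := subdiff_char hn asub.
have PTa : proj T *m alpha = e by move: asub; rewrite dsub => -[].
have hc : forall s, inspace (perp T) s -> dual_norm nA s <= 1 ->
    dotv s v <= dotv (proj (perp T) *m alpha) v.
  move=> s hs ds.
  have hb : subdiff nA u (e + s).
    rewrite dsub; split.
      rewrite mulmxDr proj_idv // proj_orth ?addr0 //; exact/inperpP.
    by rewrite mulmxDr (proj_orth (perp_orth dT)) add0r proj_idv.
  have [_ bub] := subdiff_char hn hb.
  have ea : dotv alpha v = dotv e v + dotv (proj (perp T) *m alpha) v.
    by rewrite {1}(decomp T alpha) PTa dotvDl.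
  have := bub v; rewrite -hv ea dotvDl; lra.
have hd : nA (proj (perp T) *m v) <= dotv (proj (perp T) *m alpha) v.
  rewrite dsup; last exact: proj_inv.
  apply: ge_sup.
    exists (dotv 0 (proj (perp T) *m v)); exists 0 => //; split;
      [exact: inspace0 | exact: dual0].
  move=> _ [w [hw dw] <-].
  rewrite dotv_mul proj_sym proj_idv //; exact: hc.
have e1 : dotv (proj (perp T) *m alpha) v = dotv alpha (proj (perp T) *m v).
  by rewrite dotv_mul proj_sym.
have e2 : dotv alpha (proj V *m v) = dotv (proj V *m alpha) (proj V *m v).
  by rewrite !dotv_mul !proj_sym (proj_idv (proj_inv _ _)).
have he : nA (proj V *m v) <= dotv (proj V *m alpha) (proj V *m v).
  move: hd; rewrite sep e1 sd dotvDr -e2.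
  have := aub (proj W *m v); lra.
have hf := dual_le hn (proj V *m alpha) (proj V *m v).
have h0 := nA_ge0 hn (proj V *m v).
have hz : nA (proj V *m v) = 0 by nra.
by case: hn => h _ _; apply: h.
Qed.

End Final.

Lemma mid_id (R : realFieldType) (y a b : R) :
  (y - 2^-1 * (a + b)) ^+ 2 =
  2^-1 * (y - a) ^+ 2 + 2^-1 * (y - b) ^+ 2 - 2^-1 * 2^-1 * (a - b) ^+ 2.
Proof.
set h : R := 2^-1.
have h2 : h * 2 = 1 by rewrite /h mulVf // pnatr_eq0.
apply/eqP; rewrite -subr_eq0.
have -> : (y - h * (a + b)) ^+ 2 -
   (h * (y - a) ^+ 2 + h * (y - b) ^+ 2 - h * h * (a - b) ^+ 2) =
   (1 - h * 2) * (y ^+ 2 - h * (a ^+ 2 + b ^+ 2)) by ring.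
by rewrite h2 subrr mul0r.
Qed.

Lemma sqnorm2_ge0 (R : realType) n (v : 'cV[R]_n) : 0 <= sqnorm2 v.
Proof. by rewrite /sqnorm2 sumr_ge0 // => i _; exact: sqr_ge0. Qed.

Lemma sqnorm2_eq0 (R : realType) n (v : 'cV[R]_n) : sqnorm2 v = 0 -> v = 0.
Proof.
move=> H; apply/matrixP => i j; rewrite (ord1 j) mxE.
apply/eqP; rewrite -sqrf_eq0; apply/eqP.
by apply: (psumr_eq0P _ H) => // k _; exact: sqr_ge0.
Qed.

Lemma fit (R : realType) (M N P : nat) (Phi : 'M[R]_(M, N)) (L : 'M[R]_(N, P))
    (nA : 'cV[R]_P -> R) (y : 'cV[R]_M) (lambda : R) (xs x : 'cV[R]_N) :
  is_norm nA -> 0 < lambda ->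
  is_minimizer (objective Phi L nA y lambda) xs ->
  is_minimizer (objective Phi L nA y lambda) x ->
  Phi *m x = Phi *m xs /\ nA (L^T *m x) = nA (L^T *m xs).
Proof.
move=> hn lam0 hxs hx.
have J1 := hx xs; have J2 := hxs x.
set mid := (2^-1 : R) *: (x + xs).
have J3 := hxs mid.
move: J1 J2 J3; rewrite /objective.
have S : sqnorm2 (y - Phi *m mid) = 2^-1 * sqnorm2 (y - Phi *m x) +
    2^-1 * sqnorm2 (y - Phi *m xs) - 2^-1 * 2^-1 * sqnorm2 (Phi *m x - Phi *m xs).
  rewrite /sqnorm2 !mulr_sumr -big_split -sumrB /=; apply: eq_bigr => i _.
  rewrite /mid -scalemxAr mulmxDr !mxE mid_id; by [].
have Nm : nA (L^T *m mid) <= 2^-1 * nA (L^T *m x) + 2^-1 * nA (L^T *m xs).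
  case: hn => _ hZ hT.
  rewrite /mid -scalemxAr mulmxDr hZ ger0_norm ?invr_ge0 ?ler0n // -mulrDr.
  by rewrite ler_wpM2l ?invr_ge0 ?ler0n.
rewrite S.
have D0 := sqnorm2_ge0 (Phi *m x - Phi *m xs).
move=> J1 J2 J3.
have lN : lambda * nA (L^T *m mid) <=
    lambda * (2^-1 * nA (L^T *m x) + 2^-1 * nA (L^T *m xs)).
  by rewrite ler_wpM2l // ltW.
have D1 : sqnorm2 (Phi *m x - Phi *m xs) = 0.
  apply/eqP; rewrite eq_le D0 andbT.
  have h4 : (0 : R) < 2^-1 * 2^-1 * 2^-1 by rewrite !mulr_gt0 // invr_gt0 ltr0n.
  rewrite -(pmulr_rle0 _ h4).
  rewrite !mulrDr in lN. lra.
have e1 : Phi *m x = Phi *m xs by apply/eqP; rewrite -subr_eq0; apply/eqP; exact: sqnorm2_eq0.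
split => //.
rewrite e1 in J1 J2.
have : lambda * nA (L^T *m x) = lambda * nA (L^T *m xs) by lra.
by apply: mulfI; rewrite gt_eqF.
Qed.

Unset Implicit Arguments.

Theorem corollary2 (R : realType) (M N P : nat)
    (Phi : 'M[R]_(M, N)) (L : 'M[R]_(N, P)) (nA : 'cV[R]_P -> R)
    (y : 'cV[R]_M) (lambda : R) (xs : 'cV[R]_N)
    (T V W : 'M[R]_P) (e : 'cV[R]_P) :
  is_norm nA ->
  0 < lambda ->
  is_minimizer (objective Phi L nA y lambda) xs ->
  decomposable_at nA (L^T *m xs) T e ->
  separable_on nA (perp T) V W ->
  (exists (eta : 'cV[R]_M) (alpha : 'cV[R]_P),
      subdiff nA (L^T *m xs) alpha /\
      Phi^T *m eta = L *m alpha /\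
      dual_norm nA (proj V *m alpha) < 1) ->
  (forall x1 x2 : 'cV[R]_N,
      proj V *m (L^T *m x1) = 0 -> proj V *m (L^T *m x2) = 0 ->
      Phi *m x1 = Phi *m x2 -> x1 = x2) ->
  forall x : 'cV[R]_N,
    is_minimizer (objective Phi L nA y lambda) x -> x = xs.
Proof.
move=> hn lam0 xsmin dec sepo [eta [alpha [asub [aeq adual]]]] inj x xmin.
have [hPhi hnA] := fit hn lam0 xsmin xmin.
have [du _] := subdiff_char hn asub.
have hv : dotv alpha (L^T *m x) = nA (L^T *m x).
  have -> : L^T *m x = L^T *m xs + L^T *m (x - xs) by rewrite -mulmxDr addrC subrK.
  rewrite dotvDr du dotv_mul trmxK -aeq -dotv_mul mulmxBr hPhi subrr dotv0r addr0.
  by rewrite -mulmxDr addrC subrK hnA.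
apply: inj.
- have := PV_zero hn dec sepo asub adual hv. by [].
- have := PV_zero hn dec sepo asub adual du. by [].
- exact: hPhi.
Qed.
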